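(* Let $G$ be a finite simple directed graph. The edge set of $\mathcal TG$ can be partitioned into edge-disjoint simple cycles of $\mathcal TG$, each of which is mapped by $p$ bijectively onto a simple cycle of $G$. Moreover, if $C$ is a simple cycle of $G$ with vertex set $W$, the number of cycles of this partition lying above $C$ (i.e. mapped by $p$ onto $C$) equals the number of forests of $G$ rooted in $W$.
   Context: A spanning tree of a directed graph $G=(V,E)$ is a subgraph on all vertices with no cycle, one vertex (root) of outdegree $0$ and all others of outdegree $1$. For $W\subseteq V$ nonempty, a forest rooted in $W$ is a subgraph on all vertices, with no cycle, in which vertices of $W$ have outdegree $0$ and all others outdegree $1$. The tree graph $\mathcal TG$ has the spanning trees of $G$ as vertices; for a tree $\mathbf a$ rooted at $r$ and an edge $e$ with source $r$, let $\mathbf b$ be obtained by adding $e$ to $\mathbf a$ and deleting the edge of $\mathbf a$ going out of the target $t(e)$; then $\mathbf a\to\mathbf b$ is an edge of $\mathcal TG$. The projection $p$ maps each spanning tree to its root and each edge $\mathbf a\to\mathbf b$ of $\mathcal TG$ to the edge $e$ of $G$ used to construct it. A simple cycle is a closed path traversing each of its vertices and edges exactly once. *)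

(* Defs.v *)
From mathcomp Require Import all_boot.
Set Implicit Arguments. Unset Strict Implicit. Unset Printing Implicit Defensive.

(* A finite simple directed graph: vertex type V : finType, edge set
   E : {set V * V} (no multi-edges by construction), loopless assumed
   in the theorem.  An edge e = (source, target) = (e.1, e.2). *)

Section Graphs.
Variable V : finType.
Implicit Types (E A : {set V * V}) (W : {set V}).

Definition edge_rel A : rel V := fun x y => (x, y) \in A.

Definition outdeg A (v : V) : nat := #|[set y | (v, y) \in A]|.

Definition acyclic A : bool :=
  [forall x, forall y, ((x, y) \in A) ==> ~~ connect (edge_rel A) y x].

Definition forest E W A : bool :=
  [&& A \subset E, acyclic A & [forall v, outdeg A v == (if v \in W then 0 else 1)]].

Definition spanning_tree E A : bool := [exists r, forest E [set r] A].

(* edges of the tree graph TG: a pair (a, e) with a a spanning tree whose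
   root is the source of e (the root is its unique outdegree-0 vertex) *)
Definition TGedge E (x : {set V * V} * (V * V)) : bool :=
  [&& spanning_tree E x.1, x.2 \in E & outdeg x.1 x.2.1 == 0].

Definition TGtarget (x : {set V * V} * (V * V)) : {set V * V} :=
  (x.1 :\: [set f in x.1 | f.1 == x.2.2]) :|: [set x.2].

Definition proj (x : {set V * V} * (V * V)) : V * V := x.2.

Definition TG_simple_cycle E (s : seq ({set V * V} * (V * V))) : bool :=
  [&& s != [::], all (TGedge E) s,
      cycle (fun x y => TGtarget x == y.1) s & uniq (map fst s)].

Definition G_simple_cycle E (w : seq V) : bool :=
  [&& w != [::], uniq w & cycle (edge_rel E) w].

Definition cycle_edges (w : seq V) : {set V * V} := [set (x, next w x) | x in w].

End Graphs.

(* Main.v *)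
Require Import Defs.
From mathcomp Require Import all_boot.
From mathcomp Require Import zify.
Set Implicit Arguments. Unset Strict Implicit. Unset Printing Implicit Defensive.

Lemma outdeg0P (V : finType) (A : {set V * V}) v :
  reflect (forall y, (v, y) \notin A) (outdeg A v == 0).
Proof.
rewrite /outdeg cards_eq0; apply: (iffP eqP) => [H y | H].
  apply/negP => vy; have : y \in [set y | (v, y) \in A] by rewrite inE.
  by rewrite H inE.
by apply/setP => y; rewrite !inE (negbTE (H y)).
Qed.

Lemma outdeg1P (V : finType) (A : {set V * V}) v :
  reflect (exists y, forall z, ((v, z) \in A) = (z == y)) (outdeg A v == 1).
Proof.
rewrite /outdeg; apply: (iffP cards1P) => [[y Hy] | [y Hy]]; exists y.
  by move=> z; move/setP: Hy => /(_ z); rewrite !inE.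
by apply/setP => z; rewrite !inE Hy.
Qed.

Lemma acyclic_rank (V : finType) (A : {set V * V}) :
  (exists h : V -> nat, forall x y, (x, y) \in A -> h y < h x) -> acyclic A.
Proof.
move=> [h Hh]; apply/forallP => x; apply/forallP => y; apply/implyP => xy.
apply/negP => /connectP [p pth lst].
have key : forall q z, path (edge_rel A) z q -> h (last z q) <= h z.
  elim=> [//|z q IH] z0 /= /andP [yz pz].
  by apply: leq_trans (IH _ pz) (ltnW (Hh _ _ yz)).
have := key _ _ pth; rewrite -lst => le; have := Hh _ _ xy; by rewrite ltnNge le.
Qed.

Lemma rank_acyclic (V : finType) (A : {set V * V}) :
  acyclic A -> exists h : V -> nat, forall x y, (x, y) \in A -> h y < h x.
Proof.
move=> Ha; exists (fun x => #|[set z | connect (edge_rel A) x z]|) => x y xy.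
apply: proper_card; apply/properP; split.
  apply/subsetP => z; rewrite !inE => yz; apply: connect_trans yz.
  by apply: connect1.
exists x; first by rewrite inE connect0.
rewrite inE; move/forallP: Ha => /(_ x) /forallP /(_ y) /implyP; exact.
Qed.

Lemma acyclic_sub (V : finType) (A B : {set V * V}) :
  A \subset B -> acyclic B -> acyclic A.
Proof.
move=> sAB /rank_acyclic [h Hh]; apply: acyclic_rank; exists h => x y xy.
by apply: Hh; apply: (subsetP sAB).
Qed.

Lemma forest_reach (V : finType) (E A : {set V * V}) (W : {set V}) v :
  forest E W A -> exists2 r, r \in W & connect (edge_rel A) v r.
Proof.
case/and3P => _ /rank_acyclic [h Hh] /forallP Hd.
elim: {v} (h v) {-2}v (leqnn (h v)) => [|n IH] v hv.
  case vW: (v \in W); first by exists v => //; exact: connect0.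
  have := Hd v; rewrite vW => /outdeg1P [y Hy].
  by have := Hh v y; rewrite Hy eqxx => /(_ isT); rewrite ltnNge (leq_trans hv).
case vW: (v \in W); first by exists v => //; exact: connect0.
have := Hd v; rewrite vW => /outdeg1P [y Hy].
have vy : (v, y) \in A by rewrite Hy.
have [r rW yr] := IH y (leq_trans (Hh _ _ vy) hv).
by exists r => //; apply: connect_trans yr; apply: connect1.
Qed.


Lemma index_next (T : eqType) (u : T) (s : seq T) x :
  uniq (u :: s) -> x \in u :: s -> next (u :: s) x != u ->
  index (next (u :: s) x) (u :: s) = (index x (u :: s)).+1.
Proof.
move=> Hu xw; rewrite next_nth xw.
have ilt : index x (u :: s) < size (u :: s) by rewrite index_mem.
move: ilt; set i := index x (u :: s) => ilt.
case: (ltnP i (size s)) => [ilts _ | iges]; last first.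
  by rewrite nth_default // eqxx.
have -> : nth u s i = nth u (u :: s) i.+1 by [].
by rewrite index_uniq.
Qed.

Lemma cyc_acyclic (V : finType) (E F : {set V * V}) (u : V) (s : seq V) :
  uniq (u :: s) -> forest E [set x in u :: s] F ->
  acyclic ((F :|: cycle_edges (u :: s)) :\ (u, next (u :: s) u)).
Proof.
set w := u :: s => Hu Hf.
have /and3P [_ /rank_acyclic [hF HhF] /forallP Hd] := Hf.
apply: acyclic_rank.
exists (fun v => if v \in w then (if v == u then 0 else size w - index v w)
                 else size w + hF v) => x y.
rewrite in_setD1 in_setU => /andP [neq /orP [xyF | xyC]].
  have xw : x \notin w.
    apply/negP => xw; have := Hd x; rewrite inE xw => /outdeg0P /(_ y).
    by rewrite xyF.
  rewrite (negbTE xw); have := HhF _ _ xyF => lt.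
  case: ifP => _; last by rewrite ltn_add2l.
  case: ifP => _; first by lia.
  by lia.
case/imsetP: xyC => x' x'w exy.
have ex : x = x' := f_equal fst exy.
have ey : y = next w x' := f_equal snd exy.
subst x' y.
have xu : x != u by apply: contra neq => /eqP ->.
rewrite x'w mem_next x'w (negbTE xu).
have ilt : index x w < size w by rewrite index_mem.
case: ifP => yu; first by lia.
rewrite index_next //; last by rewrite yu.
rewrite -/w; lia.
Qed.


Definition key (V : finType) (x : {set V * V} * (V * V)) : {set V * V} :=
  x.1 :|: [set x.2].

Lemma memC (V : finType) (w : seq V) a b :
  ((a, b) \in cycle_edges w) = (a \in w) && (b == next w a).
Proof.
apply/imsetP/andP => [[x xw [-> ->]] | [aw /eqP ->]]; last by exists a.
by rewrite xw.
Qed.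

Lemma cycle_edges_rot (V : finType) (w : seq V) i :
  uniq w -> cycle_edges (rot i w) = cycle_edges w.
Proof.
move=> Hu; apply/setP => [[a b]]; rewrite !memC mem_rot next_rot //.
Qed.

Lemma connect_cycle (V : finType) (e : rel V) (w : seq V) x y :
  cycle e w -> x \in w -> y \in w -> connect e x y.
Proof.
move=> cw xw yw; case: (rot_to xw) => i s' ew.
have : cycle e (x :: s') by rewrite -ew rot_cycle.
rewrite /cycle => /path_connect; apply.
by rewrite -cats1 -cat_cons mem_cat -ew mem_rot yw.
Qed.


Lemma Bmain (V : finType) (E : {set V * V}) (loopless : forall v : V, (v, v) \notin E)
  (w : seq V) (F : {set V * V}) :
  G_simple_cycle E w -> forest E [set x in w] F ->
  [set y | TGedge E y && (key y == F :|: cycle_edges w)] =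
  [set ((F :|: cycle_edges w) :\ f, f) | f in cycle_edges w].
Proof.
case/and3P => wn Hu cw Hf.
have /and3P [FE Facy /forallP Hd] := Hf.
set C := cycle_edges w; set g := F :|: C.
have cE : forall x, x \in w -> (x, next w x) \in E.
  by move=> x xw; have := next_cycle cw xw.
have CE : C \subset E by apply/subsetP => -[a b]; rewrite memC => /andP [aw /eqP ->]; apply: cE.
have gE : g \subset E by rewrite subUset FE CE.
have FW : forall a b, (a, b) \in F -> a \notin w.
  move=> a b ab; apply/negP => aw; have := Hd a; rewrite inE aw => /outdeg0P /(_ b).
  by rewrite ab.
have FC : forall z, z \in F -> z \notin C.
  move=> [z1 z2] zF; rewrite memC; apply/negP => /andP [z1w _].
  by have := FW _ _ zF; rewrite z1w.
apply/setP => -[a f]; rewrite inE; apply/idP/imsetP.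
- case/andP => /and3P [/existsP [r Hr] fE /outdeg0P f0] /eqP kg; rewrite /= in Hr fE f0 kg.
  have fg : f \in g by rewrite -kg /key !inE eqxx orbT.
  have fa : f \notin a by case: f {fg kg fE} f0 => f1 f2 /(_ f2).
  have ag : a = g :\ f.
    apply/setP => z; rewrite -kg /key !inE; case: (z =P f) => [-> | _] /=.
      by rewrite (negbTE fa).
    by rewrite orbF.
  exists f => //; last by rewrite ag.
  move: fg; rewrite /g in_setU => /orP [fF | //].
  exfalso.
  have [u uw] : exists u, u \in w by case: (w) wn => [//|u s] _; exists u; rewrite mem_head.
  have Ca : C \subset a.
    apply/subsetP => z zC; rewrite ag !inE zC orbT andbT.
    apply/negP => /eqP zf; move: zC; rewrite zf; apply/negP; exact: FC.
  have /and3P [_ aacy _] := Hr.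
  have cC : cycle (edge_rel a) w.
    apply: (@sub_in_cycle _ (mem w) (fun x y => next w x == y)); last first.
    + exact: cycle_next.
    + by apply/allP.
    move=> x y xw _ /eqP <-; rewrite /edge_rel; apply: (subsetP Ca).
    by rewrite memC xw eqxx.
  move/forallP: aacy => /(_ u) /forallP /(_ (next w u)) /implyP.
  rewrite (subsetP Ca) ?memC ?uw ?eqxx // => /(_ isT) /negP; apply.
  by apply: (connect_cycle cC); rewrite ?mem_next uw.
- move=> [f' f'C [-> ->]]; rewrite {a f}.
  move: f'C; case: f' => x y; rewrite memC => /andP [xw /eqP ->].
  set f := (x, next w x).
  have fC : f \in C by rewrite memC xw eqxx.
  have fg : f \in g by rewrite in_setU fC orbT.
  have Hout : forall v z, ((v, z) \in g :\ f) =
      if v \in w then (v != x) && (z == next w v) else (v, z) \in F.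
    move=> v z; rewrite !inE memC /f xpair_eqE.
    case: ifP => vw.
      have -> : ((v, z) \in F) = false by apply/negbTE/negP => /FW; rewrite vw.
      by case: (v =P x) => [-> | _] //=; rewrite andbC; case: (z =P next w x).
    rewrite andFb orbF; case: (v =P x) => [vx | _] //=; by move: vw; rewrite vx xw.
  have f0 : outdeg (g :\ f) x == 0 by apply/outdeg0P => z; rewrite Hout xw eqxx.
  rewrite /TGedge /= f0 cE // andbT; apply/andP; split; last first.
    by rewrite /key /= setUC setD1K.
  rewrite andbT; apply/existsP; exists x; apply/and3P; split.
  + by apply: subset_trans gE; apply: subsetDl.
  + case: (rot_to xw) => i s' ew.
    have H := @cyc_acyclic V E F x s'.
    have ux : uniq (x :: s') by rewrite -ew rot_uniq.
    have ce : cycle_edges (x :: s') = C by rewrite -ew cycle_edges_rot.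
    have nx : next (x :: s') x = next w x by rewrite -ew next_rot.
    have st : [set y in x :: s'] = [set y in w].
      by apply/setP => z; rewrite !in_set -ew mem_rot.
    rewrite ce nx st in H; exact: (H ux Hf).
  + apply/forallP => v; rewrite inE.
    case: (v =P x) => [-> | vx]; first exact: f0.
    apply/outdeg1P; case vw: (v \in w).
      by exists (next w v) => z; rewrite Hout vw; case: (v =P x).
    have := Hd v; rewrite inE vw => /outdeg1P [z0 Hz0].
    by exists z0 => z; rewrite Hout vw Hz0.
Qed.


Lemma Amain (V : finType) (E : {set V * V}) (loopless : forall v : V, (v, v) \notin E)
  (x : {set V * V} * (V * V)) :
  TGedge E x -> exists w, [/\ G_simple_cycle E w, cycle_edges w \subset key x &
                           forest E [set y in w] (key x :\: cycle_edges w)].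
Proof.
case: x => a [r' t]; case/and3P => /= /existsP [r Hr] eE /eqP r0.
have /and3P [aE aacy /forallP Hd] := Hr.
have rr : r' = r.
  apply/eqP; apply/negPn/negP => nr; have := Hd r'; rewrite inE (negbTE nr) r0.
  by [].
subst r'.
set g := key (a, (r, t)).
have gE : g \subset E by rewrite /g /key subUset aE /= sub1set eE.
have Hg : forall v, exists y, forall z, ((v, z) \in g) = (z == y).
  move=> v; case: (v =P r) => [-> | vr].
    exists t => z; rewrite /g /key !inE /= xpair_eqE eqxx /=.
    by have := Hd r; rewrite inE eqxx => /outdeg0P /(_ z) /negbTE ->.
  have := Hd v; rewrite inE; move/eqP: vr => /negbTE vr; rewrite vr.
  move=> /outdeg1P [y Hy]; exists y => z.
  by rewrite /g /key !inE /= xpair_eqE vr /= orbF Hy.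
have [r1 ] := forest_reach t Hr; rewrite inE => /eqP -> /connectP [p pth].
case: (shortenP pth) => p' pth' up' _ lst.
set w := t :: p'.
have ag : a \subset g by rewrite /g /key subsetUl.
have cg : cycle (edge_rel g) w.
  rewrite /w /= rcons_path -lst /edge_rel /g /key in_setU /= set11 orbT andbT.
  by apply: sub_path pth' => u v uv; apply: (subsetP ag).
have Cg : cycle_edges w \subset g.
  apply/subsetP => -[u v]; rewrite memC => /andP [uw /eqP ->].
  exact: next_cycle cg uw.
exists w; split => //.
  rewrite /G_simple_cycle up' /=; apply: sub_cycle cg => u v uv.
  exact: (subsetP gE).
apply/and3P; split.
- by apply: subset_trans gE; apply: subsetDl.
- apply: acyclic_sub aacy; apply/subsetP => z; rewrite !inE /= => /andP [zC].
  case/orP => [// | /eqP zrt]; exfalso; move: zC; rewrite zrt memC negb_and.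
  have rw : r \in w by rewrite lst /w mem_last.
  have nr : next w r = t.
    have [y Hy] := Hg r.
    have := next_cycle cg rw; rewrite /edge_rel Hy => /eqP ->.
    by apply/esym/eqP; rewrite -Hy /g /key !inE eqxx orbT.
  by rewrite rw nr eqxx.
- apply/forallP => v; rewrite inE; have [y Hy] := Hg v.
  case vw: (v \in w).
    apply/outdeg0P => z; rewrite in_setD memC vw andTb Hy; apply/negP => /andP [nz /eqP zy].
    move: nz; rewrite zy; have := next_cycle cg vw; rewrite /edge_rel Hy => /eqP ->.
    by rewrite eqxx.
  by apply/outdeg1P; exists y => z; rewrite in_setD memC vw andFb Hy.
Qed.


Lemma forest_src (V : finType) (E F : {set V * V}) (w : seq V) a b :
  forest E [set y in w] F -> (a, b) \in F -> a \notin w.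
Proof.
case/and3P => _ _ /forallP Hd ab; apply/negP => aw.
by have := Hd a; rewrite inE aw => /outdeg0P /(_ b); rewrite ab.
Qed.

Lemma forest_disj (V : finType) (E F : {set V * V}) (w : seq V) z :
  forest E [set y in w] F -> z \in F -> z \notin cycle_edges w.
Proof.
case/and3P => _ _ /forallP Hd; case: z => a b ab; rewrite memC.
apply/negP => /andP [aw _]; have := Hd a; rewrite inE aw => /outdeg0P /(_ b).
by rewrite ab.
Qed.

Lemma mem_cycle_edges (V : finType) (w : seq V) v :
  (v \in w) = [exists b, (v, b) \in cycle_edges w].
Proof.
apply/idP/existsP => [vw | [b]]; first by exists (next w v); rewrite memC vw eqxx.
by rewrite memC => /andP [].
Qed.

Lemma block_struct (V : finType) (E : {set V * V}) (loopless : forall v : V, (v, v) \notin E)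
  (x : {set V * V} * (V * V)) : TGedge E x ->
  exists w F, [/\ G_simple_cycle E w, forest E [set y in w] F,
    key x = F :|: cycle_edges w &
    [set y in [set x | TGedge E x] | key x == key y] =
    [set ((F :|: cycle_edges w) :\ f, f) | f in cycle_edges w]].
Proof.
move=> Tx; have [w [Gw Cx Hf]] := Amain loopless Tx.
exists w, (key x :\: cycle_edges w).
have kx : key x = (key x :\: cycle_edges w) :|: cycle_edges w.
  apply/setP => z; rewrite in_setU in_setD.
  by case: (boolP (z \in cycle_edges w)) => zC; [rewrite (subsetP Cx _ zC) orbT | rewrite orbF].
split => //; rewrite -(Bmain loopless Gw Hf) -kx.
by apply/setP => y; rewrite !inE eq_sym.
Qed.

Lemma TGcycle (V : finType) (E : {set V * V}) (loopless : forall v : V, (v, v) \notin E)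
  (w : seq V) (F : {set V * V}) :
  G_simple_cycle E w -> forest E [set y in w] F ->
  let g := F :|: cycle_edges w in
  let s := [seq (g :\ (v, next w v), (v, next w v)) | v <- w] in
  TG_simple_cycle E s /\
  [set ((F :|: cycle_edges w) :\ f, f) | f in cycle_edges w] = [set y in s].
Proof.
move=> Gw Hf g s.
have Bm := Bmain loopless Gw Hf.
have /and3P [wn Hu cw] := Gw.
set C := cycle_edges w in Bm *.
have Bs : [set (g :\ f, f) | f in C] = [set y in s].
  apply/setP => y; rewrite inE; apply/imsetP/mapP => [[f] | [v vw ->]].
    by case: f => a b; rewrite memC => /andP [aw /eqP ->] ->; exists a.
  by exists (v, next w v) => //; rewrite memC vw eqxx.
split => //; apply/and4P; split.
- by rewrite /s; case: (w) wn.
- apply/allP => y ys; have : y \in [set (g :\ f, f) | f in C] by rewrite Bs inE.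
  by rewrite -Bm inE => /andP [].
- rewrite /s cycle_map.
  apply: (@sub_in_cycle _ (mem w) (fun x y => next w x == y)); last first.
  + exact: cycle_next.
  + by apply/allP.
  move=> v v' vw _ /eqP <-; rewrite /relpre /= /TGtarget /=.
  set f := (v, next w v); set f' := (next w v, next w (next w v)).
  have cE : forall x, x \in w -> (x, next w x) \in E.
    by move=> x xw; have := next_cycle cw xw.
  have ff' : f != f'.
    rewrite /f /f' xpair_eqE negb_and; apply/orP; left.
    by apply/eqP => e; move: (cE v vw); rewrite -e (negbTE (loopless v)).
  have fg : f \in g by rewrite in_setU memC vw eqxx orbT.
  have nvw : next w v \in w by rewrite mem_next.
  have hv' : forall z, z \in g -> z.1 = next w v -> z = f'.
    move=> [z1 z2]; rewrite in_setU => /orP [zF | ].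
      by move=> /= e; have := forest_src Hf zF; rewrite e nvw.
    by rewrite memC => /andP [_ /eqP ->] /= ->.
  have f'g : f' \in g by rewrite in_setU memC nvw eqxx orbT.
  apply/eqP/setP => z; rewrite in_setU in_set1 in_setD !in_setD1 in_set in_setD1.
  case: (z =P f) => [-> | zf] /=.
    by rewrite ff' fg.
  rewrite orbF; case: (z =P f') => [-> | zf'] /=.
    by rewrite f'g /f' /= eqxx.
  case zg: (z \in g); rewrite ?andbF ?andbT //=; apply/negP => /eqP /(hv' _ zg).
  exact: zf'.
- rewrite /s -map_comp; rewrite map_inj_in_uniq // => v1 v2 v1w v2w /= e.
  have f1g : (v1, next w v1) \in g by rewrite in_setU memC v1w eqxx orbT.
  apply/eqP/negPn/negP => ne.
  have : (v1, next w v1) \in g :\ (v2, next w v2).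
    by rewrite in_setD1 f1g andbT xpair_eqE (negbTE ne).
  by rewrite -e in_setD1 eqxx.
Qed.


Lemma proj_block (V : finType) (g C : {set V * V}) :
  [set proj x | x in [set (g :\ f, f) | f in C]] = C.
Proof. by rewrite -imset_comp imset_id. Qed.

Lemma key_gf (V : finType) (g : {set V * V}) f : f \in g -> key (g :\ f, f) = g.
Proof. by move=> fg; rewrite /key /= setUC setD1K. Qed.

Theorem mainTheorem4 (V : finType) (E : {set V * V})
    (loopless : forall v : V, (v, v) \notin E) :
  exists P : {set {set {set V * V} * (V * V)}},
    [/\ partition P [set x | TGedge E x],
        (forall B, B \in P ->
           (exists s, TG_simple_cycle E s /\ B = [set x in s]) /\
           (exists w, G_simple_cycle E w /\ {in B &, injective (@proj V)} /\
                      [set proj x | x in B] = cycle_edges w))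
      & (forall w : seq V, G_simple_cycle E w ->
           #|[set B in P | [set proj x | x in B] == cycle_edges w]|
           = #|[set F : {set V * V} | forest E [set x in w] F]|)].
Proof.
set T := [set x | TGedge E x].
exists (preim_partition (@key V) T); split.
- exact: preim_partitionP.
- move=> B /imsetP [x xT ->].
  have Tx : TGedge E x by rewrite inE in xT.
  have [w [F [Gw Hf kx Bx]]] := block_struct loopless Tx.
  rewrite Bx; have [Ts Bs] := TGcycle loopless Gw Hf; split.
    by eexists; split; [exact: Ts | exact: Bs].
  exists w; split => //; split; last exact: proj_block.
  by move=> y1 y2 /imsetP [f1 _ ->] /imsetP [f2 _ ->] /= ->.
- move=> w Gw.
  set C := cycle_edges w.
  set phi := fun F : {set V * V} => [set y | TGedge E y && (key y == F :|: C)].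
  have [u uw] : exists u, u \in w.
    by case/and3P: Gw; case: (w) => [//|u s] _ _ _; exists u; rewrite mem_head.
  set f0 := (u, next w u).
  have f0C : f0 \in C by rewrite memC uw eqxx.
  have f0g : forall F, f0 \in F :|: C by move=> F; rewrite in_setU f0C orbT.
  have x0in : forall F, forest E [set x in w] F -> ((F :|: C) :\ f0, f0) \in phi F.
    by move=> F Hf; rewrite /phi (Bmain loopless Gw Hf); apply: imset_f.
  rewrite -(@card_in_imset _ _ phi); last first.
    move=> F1 F2; rewrite !inE => H1 H2 e.
    have := x0in _ H1; rewrite e inE key_gf // => /andP [_ /eqP e12].
    apply/setP => z; apply/idP/idP => zF.
      have : z \in F2 :|: C by rewrite -e12 in_setU zF.
      by rewrite in_setU (negbTE (forest_disj H1 zF)) orbF.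
    have : z \in F1 :|: C by rewrite e12 in_setU zF.
    by rewrite in_setU (negbTE (forest_disj H2 zF)) orbF.
  apply: eq_card => B; rewrite inE; apply/andP/imsetP.
  - case=> /imsetP [x xT ->] /eqP pB.
    have Tx : TGedge E x by rewrite inE in xT.
    have [w' [F' [Gw' Hf' kx Bx]]] := block_struct loopless Tx.
    move: pB; rewrite Bx proj_block => eC.
    have sw : [set y in w'] = [set y in w].
      by apply/setP => y; rewrite !in_set !mem_cycle_edges eC.
    exists F'; first by rewrite inE -sw.
    by rewrite /phi -eC (Bmain loopless Gw' Hf').
  - move=> [F]; rewrite inE => Hf ->; split; last first.
      by rewrite /phi (Bmain loopless Gw Hf) proj_block.
    apply/imsetP; exists ((F :|: C) :\ f0, f0).
      by have := x0in _ Hf; rewrite /T !inE => /andP [].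
    by apply/setP => y; rewrite /T !inE key_gf // eq_sym.
Qed.
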